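(* Let $\mathcal H$ be a real Hilbert space. Let $\Psi: \mathcal H \to \mathbb R \cup \{+\infty\}$ be proper, lower-semicontinuous and convex, and let $\Phi: \mathcal H \to \mathbb R$ be convex and continuously differentiable with $L$-Lipschitz continuous gradient; set $\Theta=\Psi+\Phi$ and suppose $\operatorname{argmin}\Theta\neq\emptyset$. Let $\alpha>3$ and $0<s<\frac1L$, and let $(x_k)$ be generated by: given arbitrary $x_0,x_1\in\mathcal H$, for $k\ge1$, $$y_k = x_k + \frac{k-1}{k+\alpha-1}(x_k-x_{k-1}),\qquad x_{k+1} = \operatorname{prox}_{s\Psi}\big(y_k - s\nabla\Phi(y_k)\big).$$ Let $x^*\in\operatorname{argmin}\Theta$. Then the limit $$\lim_{k\to\infty}\Big[k^2\|x_{k+1}-x_k\|^2 + (k+1)^2\big(\Theta(x_{k+1})-\Theta(x^* )\big)\Big]$$ exists.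
   Context: $\operatorname{prox}_{s\Psi}(z) = \operatorname{argmin}_{u\in\mathcal H}\{\Psi(u) + \frac{1}{2s}\|u-z\|^2\}$ denotes the proximal operator. *)

(* Defs.v *)
From HB Require Import structures.
From mathcomp Require Import all_boot all_order all_algebra.
From mathcomp Require Import all_classical all_reals all_analysis.
Set Implicit Arguments. Unset Strict Implicit. Unset Printing Implicit Defensive.
Import Order.TTheory GRing.Theory Num.Theory.
Import numFieldNormedType.Exports.
Local Open Scope classical_set_scope.
Local Open Scope ring_scope.

(* A real Hilbert space is modelled as a complete normed space H over a
   realType R whose norm comes from an inner product [ip]. *)
Definition is_inner_product (R : realType) (H : normedModType R)
  (ip : H -> H -> R) : Prop :=
  [/\ forall x y, ip x y = ip y x,
      forall a x y z, ip (a *: x + y) z = a * ip x z + ip y z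
    & forall x, `|x| ^+ 2 = ip x x].

Definition convex_fun (R : realType) (H : normedModType R) (f : H -> R) :=
  forall (x y : H) (t : R), 0 <= t <= 1 ->
    f (t *: x + (1 - t) *: y) <= t * f x + (1 - t) * f y.

Definition convex_efun (R : realType) (H : normedModType R) (f : H -> \bar R) :=
  forall (x y : H) (t : R), 0 < t < 1 ->
    (f (t *: x + (1 - t) *: y)%R <= t%:E * f x + (1 - t)%:E * f y)%E.

Definition proper_efun (R : realType) (H : Type) (f : H -> \bar R) :=
  (forall x, f x != -oo%E) /\ exists x, f x \is a fin_num.

(* p = prox_{s Psi}(z), i.e. p is a minimizer of u |-> Psi u + 1/(2s) |u - z|^2
   (this minimizer is unique, so this characterizes prox_{s Psi}(z)) *)
Definition is_prox (R : realType) (H : normedModType R) (s : R)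
  (Psi : H -> \bar R) (z p : H) :=
  forall u : H, (Psi p + ((2 * s)^-1 * `|p - z| ^+ 2)%R%:E <=
                 Psi u + ((2 * s)^-1 * `|u - z| ^+ 2)%R%:E)%E.

(* Main.v *)
Require Import Defs.
From HB Require Import structures.
From mathcomp Require Import all_boot all_order all_algebra.
From mathcomp Require Import all_classical all_reals all_analysis.
From mathcomp Require Import lra zify ring.
Import Order.TTheory GRing.Theory Num.Theory.
Import numFieldNormedType.Exports.
Local Open Scope classical_set_scope.
Local Open Scope ring_scope.
Lemma endgame (R : realType) (w : nat -> R) (B : R) (K : nat) :
  (forall k, (K <= k)%N -> 0 <= w k) ->
  (forall k, (K <= k)%N -> w k.+1 <= w k) ->
  (forall n, \sum_(K <= j < n) j%:R * w j <= B) ->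
  (fun k => k.+1%:R ^+ 2 * w k) @ \oo --> (0:R).
Proof.
move=> w0 wdec Sb.
have wmono : forall i j, (K <= i)%N -> (i <= j)%N -> w j <= w i.
  move=> i j Ki /subnK <-; elim: (j - i)%N => [|n IH]; first by rewrite add0n.
  rewrite addSn; apply: le_trans IH; apply: wdec; lia.
pose S n := \sum_(K <= j < n) j%:R * w j.
have S0 : forall n, 0 <= S n.
  move=> n; rewrite /S big_nat sumr_ge0 // => l /andP[il _]; rewrite mulr_ge0 ?w0 //.
have Smono : forall i j, (i <= j)%N -> S i <= S j.
  move=> i j ij; case: (leqP K i) => Ki; last by rewrite {1}/S big_geq ?S0 //; lia. rewrite /S [in X in _ <= X](big_cat_nat (n:=i)) // /= lerDl.
  rewrite big_nat sumr_ge0 // => l /andP[il _]; rewrite mulr_ge0 ?w0 //; lia.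
have hs : has_sup (range S).
  split; first by exists (S 0%N), 0%N.
  by exists B => _ [n _ <-]; apply: Sb.
apply/cvgrPdist_le => e e0.
have [_ [N _ <-] HN] := sup_adherent (divr_gt0 e0 (ltr0n R 8)) hs.
exists (2 * (maxn N (maxn K 1)))%N => // k /= Hk.
set m := (k./2)%N.
have km : k = (odd k + 2 * m)%N by rewrite /m mul2n odd_double_half.
have ok : (odd k <= 1)%N by case: odd.
have hm : (maxn N (maxn K 1) <= m)%N by lia.
have Km : (K <= m)%N by lia.
have Nm : (N <= m)%N by lia.
have m1 : (1 <= m)%N by lia.
have hk1 : (2 * m <= k)%N by lia.
have hk2 : (k <= 2 * m + 1)%N by lia.
have Sup : S (2 * m + 1)%N <= sup (range S) by apply: sup_upper_bound => //; exists (2 * m + 1)%N.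
have SNm : S N <= S m by apply: Smono; lia.
have low : (m.+1%:R * m%:R) * w (2 * m)%N <= S (2 * m + 1)%N - S m.
  rewrite /S (big_cat_nat (n:=m)) /=; [|by []|lia].
  rewrite addrAC subrr add0r.
  apply: le_trans (_ : \sum_(m <= j < 2 * m + 1) (m%:R * w (2 * m)%N) <= _).
    rewrite sumr_const_nat (_ : (2 * m + 1 - m = m.+1)%N); last by lia.
    by rewrite -[X in _ <= X]mulr_natr [X in _ <= X]mulrC mulrA.
  apply: ler_sum_nat => j /andP[mj j2].
  apply: ler_pM; rewrite ?ler0n ?w0 ?ler_nat //; try lia.
  apply: wmono; lia.
have wk : w k <= w (2 * m)%N by apply: wmono; lia.
have wk0 : 0 <= w k by apply: w0; lia.
have k1 : k.+1%:R ^+ 2 <= 8 * (m.+1%:R * m%:R) :> R.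
  have : (k.+1 ^ 2 <= 8 * (m.+1 * m))%N by nia.
  by rewrite -(ler_nat R) natrX !natrM.
rewrite sub0r normrN ger0_norm ?mulr_ge0 //.
have : (m.+1%:R * m%:R) * w (2 * m)%N <= e / 8 by lra.
have hpos : 0 <= m.+1%:R * m%:R :> R by rewrite mulr_ge0.
have hw : k.+1%:R ^+ 2 * w k <= 8 * (m.+1%:R * m%:R) * w (2 * m)%N.
  apply: le_trans (ler_wpM2l _ wk) _; first by rewrite exprn_ge0.
  by apply: ler_wpM2r => //; apply: le_trans wk.
lra.
Qed.

Lemma tele_sum (R : realType) (u Rr : nat -> R) :
  (forall k, (2 <= k)%N -> u k <= Rr k - Rr k.+1) ->
  (forall k, (2 <= k)%N -> 0 <= Rr k) ->
  forall n, \sum_(2 <= k < n) u k <= Rr 2%N.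
Proof.
move=> hu hR n.
case: (leqP n 2) => n2; first by rewrite big_geq // hR.
have : forall m, \sum_(2 <= k < m.+2) u k <= Rr 2%N - Rr m.+2.
  elim=> [|m IH]; first by rewrite big_geq // subrr.
  rewrite big_nat_recr //=.
  have := hu m.+2 isT; lra.
move=> /(_ (n - 2)%N); rewrite (_ : (n - 2).+2 = n)%N; last by lia.
have := hR n (ltnW n2); lra.
Qed.

Section SeqMain.
Context (R : realType) (s alpha : R) (th N V : nat -> R).
Hypotheses (s0 : 0 < s) (a3 : 3 < alpha)
  (th0 : forall k, (2 <= k)%N -> 0 <= th k)
  (N0 : forall k, (2 <= k)%N -> 0 <= N k)
  (V0 : forall k, (2 <= k)%N -> 0 <= V k).
Let c := (alpha - 1)^-1.
Let tau (k : nat) := (k%:R + alpha - 2) * c.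
Let beta (k : nat) := (k%:R - 1) / (k%:R + alpha - 1).
Hypotheses
  (HL : forall k, (2 <= k)%N ->
     tau k.+1 ^+ 2 * th k.+1 + V k.+1 / (2 * s) <=
     (tau k.+1 ^+ 2 - tau k.+1) * th k + V k / (2 * s))
  (HD : forall k, (2 <= k)%N ->
     th k.+1 + N k.+1 / (2 * s) <= th k + beta k ^+ 2 * N k / (2 * s)).

Lemma c_facts : 0 < c /\ c < 1 / 2 /\ (alpha - 1) * c = 1.
Proof.
have a3' := a3.
have a1 : 0 < alpha - 1 by lra.
have c0 : 0 < c by rewrite invr_gt0.
have cE : (alpha - 1) * c = 1 by rewrite mulfV // gt_eqF.
split => //; split => //.
have : 0 < (alpha - 3) * c by rewrite mulr_gt0 // subr_gt0.
nra.
Qed.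

Let E k := tau k ^+ 2 * th k + V k / (2 * s).
Let P k := (k%:R - 1) ^+ 2 * N k + 2 * s * k%:R ^+ 2 * th k.
Let M := (4 * s + 1) / ((alpha - 3) * c ^+ 2).
Let Q k := P k + M * E k.+1.
Let Rr k := Q k + (2 / s) * Q k.+1.

Lemma tauS k : tau k.+1 = tau k + c.
Proof. by rewrite /tau -addn1 natrD; ring. Qed.

Lemma tau_ge k : (2 <= k)%N -> 0 <= tau k.
Proof.
move=> k2; have [c0 _] := c_facts; rewrite /tau mulr_ge0 ?ltW //.
have : (2%:R <= k%:R :> R) by rewrite ler_nat.
have a3' := a3; lra.
Qed.

Lemma Edec k : (2 <= k)%N -> E k.+1 + (alpha - 3) * c * tau k * th k <= E k.
Proof.
move=> k2; have [c0 [c1 cE]] := c_facts.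
have := HL k k2; rewrite /E tauS => h.
have t0 := tau_ge k k2; have h0 := th0 k k2.
have : (tau k + c) ^+ 2 - (tau k + c) <= tau k ^+ 2 - (alpha - 3) * c * tau k.
  have -> : (alpha - 3) * c = 1 - 2 * c.
    have -> : alpha - 3 = (alpha - 1) - 2 by ring.
    by rewrite mulrBl cE.
  nra.
move=> hc.
have := ler_wpM2r h0 hc.
nra.
Qed.

Lemma beta_bound k : (2 <= k)%N -> k%:R ^+ 2 * beta k ^+ 2 <= (k%:R - 1) ^+ 2 - k%:R / 4.
Proof.
move=> k2.
have K2 : (2 <= k%:R :> R) by rewrite (ler_nat R 2 k).
set K := k%:R in K2 *.
have a3' := a3.
have d0 : 0 < K + alpha - 1 by lra.
rewrite /beta -/K expr_div_n mulrA ler_pdivrMr ?exprn_gt0 //.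
have h1 : K + 2 <= K + alpha - 1 by lra.
have h2 : (K + 2) ^+ 2 <= (K + alpha - 1) ^+ 2.
  by rewrite lerXn2r ?nnegrE //; lra.
have h3 : 0 <= (K - 1) ^+ 2 - K / 4 by nra.
apply: le_trans (_ : ((K - 1) ^+ 2 - K / 4) * (K + 2) ^+ 2 <= _); last first.
  exact: ler_wpM2l.
nra.
Qed.

Lemma Pstep k : (2 <= k)%N ->
  P k.+1 + k%:R / 4 * N k <= P k + 2 * s * (2 * k%:R + 1) * th k.+1.
Proof.
move=> k2.
have hD := HD k k2; have hb := beta_bound k k2.
have n0 := N0 k k2.
have s2 : 0 < 2 * s by rewrite mulr_gt0.
have e : forall x, 2 * s * (x / (2 * s)) = x.
  by move=> x; rewrite mulrC divfK // gt_eqF.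
have HD' : 2 * s * th k.+1 + N k.+1 <= 2 * s * th k + beta k ^+ 2 * N k.
  by have := ler_wpM2l (ltW s2) hD; rewrite !mulrDr !e.
have h1 := ler_wpM2r n0 hb.
have h2 := ler_wpM2l (exprn_ge0 2 (ler0n R k)) HD'.
rewrite /P (_ : k.+1%:R = k%:R + 1); last by rewrite -addn1 natrD.
set K := k%:R in h1 h2 *.
set b := beta k in h1 h2 *.
nra.
Qed.

Lemma M_ge0 : 0 <= M.
Proof.
have [c0 _] := c_facts; have a3' := a3; have s0' := s0.
rewrite /M divr_ge0 // ?mulr_ge0 ?exprn_ge0 ?ltW //; lra.
Qed.

Lemma Qstep k : (2 <= k)%N ->
  Q k.+1 + k%:R / 4 * N k + (k%:R + 1) * th k.+1 <= Q k.
Proof.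
move=> k2.
have [c0 [c1 cE]] := c_facts; have a3' := a3; have s0' := s0.
have hP := Pstep k k2.
have k3 : (2 <= k.+1)%N by lia.
have hE := ler_wpM2l M_ge0 (Edec k.+1 k3).
have t1 : 0 <= th k.+1 by apply: th0.
have Mf : M * ((alpha - 3) * c ^+ 2) = 4 * s + 1.
  rewrite /M divfK // mulf_neq0 ?expf_neq0 ?gt_eqF //; lra.
have coef : M * ((alpha - 3) * c * tau k.+1) = (4 * s + 1) * (k%:R + alpha - 1).
  rewrite /tau (_ : k.+1%:R = k%:R + 1); last by rewrite -addn1 natrD.
  rewrite -Mf; ring.
have coef2 : 2 * s * (2 * k%:R + 1) + (k%:R + 1) <= M * ((alpha - 3) * c * tau k.+1).
  rewrite coef; nra.
have h3 := ler_wpM2r t1 coef2.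
rewrite /Q.
move: hP hE h3; rewrite mulrDr.
set K := k%:R; set TT := tau k.+1.
nra.
Qed.

Lemma Q_ge0 k : (2 <= k)%N -> 0 <= Q k.
Proof.
move=> k2; have s0' := s0.
have t0 := th0 k k2; have n0 := N0 k k2.
have t1 : 0 <= th k.+1 by apply: th0; lia.
have v1 : 0 <= V k.+1 by apply: V0; lia.
rewrite /Q /P /E; apply: addr_ge0; [apply: addr_ge0 | apply: mulr_ge0; first exact: M_ge0].
- by rewrite mulr_ge0 // sqr_ge0.
- by rewrite !mulr_ge0 // ?sqr_ge0 // ltW.
- apply: addr_ge0; first by rewrite mulr_ge0 // sqr_ge0.
  by rewrite divr_ge0 // mulr_ge0 // ltW.
Qed.

Lemma seq_main :
  (fun k => k.+1%:R ^+ 2 * (th k.+1 + N k.+1 / (2 * s))) @ \oo --> (0:R).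
Proof.
have s0' := s0.
have s2 : 0 < 2 * s by rewrite mulr_gt0.
apply: (@endgame R (fun k => th k.+1 + N k.+1 / (2 * s)) (Rr 2%N) 2%N).
- move=> k k2; rewrite addr_ge0 ?th0 // ?divr_ge0 ?N0 // ?ltW //; lia.
- move=> k k2; have kk : (2 <= k.+1)%N by lia.
  have h := HD k.+1 kk.
  have Kge : (1 <= k.+1%:R :> R) by rewrite ler1n.
  have a3' := a3.
  have b0 : 0 <= beta k.+1 by rewrite /beta divr_ge0 //; lra.
  have b1 : beta k.+1 <= 1.
    by rewrite /beta ler_pdivrMr ?mul1r; lra.
  have n1 : 0 <= N k.+1 by apply: N0; lia.
  have bb : beta k.+1 ^+ 2 * N k.+1 <= N k.+1.
    rewrite -[X in _ <= X]mul1r; apply: ler_wpM2r => //.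
    by rewrite expr_le1.
  apply: le_trans h _; rewrite lerD2l ler_pM2r // invr_gt0 //.
- move=> n.
  apply: le_trans (@tele_sum R (fun k => k%:R * (th k.+1 + N k.+1 / (2 * s))) Rr _ _ n) _ => //.
  + move=> k k2.
    have q1 := Qstep k k2.
    have k3 : (2 <= k.+1)%N by lia.
    have q2 := Qstep k.+1 k3.
    have n0 := N0 k k2.
    have n1 : 0 <= N k.+1 by apply: N0.
    have t2 : 0 <= th k.+2 by apply: th0; lia.
    have t1 : 0 <= th k.+1 by apply: th0.
    rewrite /Rr.
    have e : k.+1%:R = k%:R + 1 :> R by rewrite -addn1 natrD.
    rewrite e in q2.
    have K0 := ler0n R k.
    have e2 : k%:R * (N k.+1 / (2 * s)) <= (2 / s) * ((k%:R + 1) / 4 * N k.+1).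
      rewrite (_ : (2 / s) * ((k%:R + 1) / 4 * N k.+1) = (k%:R + 1) * (N k.+1 / (2 * s))); last first.
        field; rewrite gt_eqF //.
      by apply: ler_wpM2r; [rewrite divr_ge0 // ltW | lra].
    have hs : 0 <= 2 / s by rewrite divr_ge0 // ltW.
    have q2b : (k%:R + 1) / 4 * N k.+1 <= Q k.+1 - Q k.+2.
      have : 0 <= (k%:R + 1 + 1) * th k.+2 by rewrite mulr_ge0 //; lra.
      lra.
    have q1b : (k%:R + 1) * th k.+1 <= Q k - Q k.+1.
      have : 0 <= k%:R / 4 * N k by rewrite mulr_ge0 // divr_ge0.
      lra.
    have q2c := ler_wpM2l hs q2b.
    rewrite /Rr.
    move: q1b q2c e2; rewrite mulrBr.
    move: (Q k) (Q k.+1) (Q k.+2) (2 / s) (N k.+1 / (2 * s)) => qa qb qc d A.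
    nra.
  + move=> k k2; rewrite /Rr addr_ge0 ?Q_ge0 // mulr_ge0 ?Q_ge0 //; last by lia.
    by rewrite divr_ge0 // ltW.
Qed.

End SeqMain.
Lemma line_derive (R : realType) (H : normedModType R) (Phi : H -> R)
  (gradPhi : H -> H) (ip : H -> H -> R) (y d : H) (t : R) :
 (forall z, differentiable Phi z /\ forall h, 'd Phi z h = ip (gradPhi z) h) ->
 is_derive t 1 (fun u : R => Phi (y + u *: d)) (ip (gradPhi (y + t *: d)) d).
Proof.
move=> hP.
pose h := (cst y + ( *:%R ^~ d)) : R -> H.
have hE : (fun u : R => Phi (y + u *: d)) = Phi \o h by [].
have dh : differentiable h t by [].
have dhE : 'd h t 1 = d.
  by rewrite diff_val /= add0r scale1r.
have dg : differentiable (Phi \o h) t.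
  by apply: differentiable_comp => //; case: (hP (h t)).
rewrite [X in is_derive _ _ X _]hE; apply: DeriveDef; first exact: diff_derivable.
rewrite deriveE // diff_comp //; last by case: (hP (h t)).
by rewrite /= dhE (proj2 (hP _)).
Qed.

Lemma quad_derive (R : realType) (H : normedModType R) (Phi : H -> R)
  (gradPhi : H -> H) (ip : H -> H -> R) (y d : H) (c K t : R) :
 (forall z, differentiable Phi z /\ forall h, 'd Phi z h = ip (gradPhi z) h) ->
 is_derive t 1 (fun u : R => Phi (y + u *: d) - u * c + K * (u * u))
    (ip (gradPhi (y + t *: d)) d - c + K * (t + t)).
Proof.
move=> hP.
have h1 := @line_derive R H Phi gradPhi ip y d t hP.
set F := (fun u : R => Phi (y + u *: d)) in h1.
have -> : (fun u : R => Phi (y + u *: d) - u * c + K * (u * u)) =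
   (F - (id * cst c) + (cst K * (id * id))) by apply/funext => u.
have h2 := (is_deriveM (is_derive_id t (1:R)) (is_derive_cst c t (1:R))).
have h3 := (is_deriveM (is_derive_cst K t (1:R)) (is_deriveM (is_derive_id t (1:R)) (is_derive_id t (1:R)))).
have h4 := is_deriveB h1 h2.
have h5 := is_deriveD h4 h3.
apply: (is_derive_eq h5).
rewrite /= !scaler0 !add0r !addr0 /GRing.scale /= !mulr1; ring.
Qed.


Section IP.
Context (R : realType) (H : normedModType R) (ip : H -> H -> R).
Hypothesis (ipC : forall x y, ip x y = ip y x)
  (ipL : forall a x y z, ip (a *: x + y) z = a * ip x z + ip y z)
  (ipN2 : forall x, `|x| ^+ 2 = ip x x).

Lemma ip0l z : ip 0 z = 0.
Proof.
have := ipL 1 0 0 z; rewrite scaler0 addr0 mul1r => h.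
lra.
Qed.
Lemma ipDl x y z : ip (x + y) z = ip x z + ip y z.
Proof. by rewrite -[x]scale1r ipL mul1r scale1r. Qed.
Lemma ipZl a x z : ip (a *: x) z = a * ip x z.
Proof. by rewrite -[a *: x]addr0 ipL ip0l addr0. Qed.
Lemma ipNl x z : ip (- x) z = - ip x z.
Proof. by rewrite -scaleN1r ipZl mulN1r. Qed.
Lemma ipDr x y z : ip z (x + y) = ip z x + ip z y.
Proof. by rewrite ipC ipDl !(ipC z). Qed.
Lemma ipZr a x z : ip z (a *: x) = a * ip z x.
Proof. by rewrite ipC ipZl ipC. Qed.
Lemma ipNr x z : ip z (- x) = - ip z x.
Proof. by rewrite ipC ipNl ipC. Qed.
Lemma ip_ge0 x : 0 <= ip x x.
Proof. by rewrite -ipN2 exprn_ge0. Qed.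

Lemma ip_bound (D d : H) (m : R) : 0 < m -> `|D| <= m * `|d| ->
  ip D d <= m * ip d d /\ - (m * ip d d) <= ip D d.
Proof.
move=> m0 hD.
have hD2 : ip D D <= m ^+ 2 * ip d d.
  rewrite -!ipN2 -exprMn; apply: lerXn2r => //; rewrite nnegrE //.
  by rewrite mulr_ge0 // ltW.
have h1 := ip_ge0 (D - m *: d).
have h2 := ip_ge0 (D + m *: d).
move: h1 h2; rewrite !(ipDl, ipDr, ipNl, ipNr, ipZl, ipZr) (ipC d D) => h1 h2.
split.
  rewrite -(ler_pM2l m0); nra.
rewrite -(ler_pM2l m0); nra.
Qed.

Context (Phi : H -> R) (g : H -> H) (L : R).
Hypothesis (hP : forall z, differentiable Phi z /\ forall h, 'd Phi z h = ip (g z) h)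
  (L0 : 0 < L) (hL : forall u v : H, `|g u - g v| <= L * `|u - v|).

Lemma mvt_line (y d : H) (K t0 : R) : 0 < t0 ->
  exists2 xi, 0 < xi < t0 &
   Phi (y + t0 *: d) - t0 * ip (g y) d + K * (t0 * t0) - Phi y =
   (ip (g (y + xi *: d)) d - ip (g y) d + K * (xi + xi)) * t0.
Proof.
move=> t00.
pose f := fun u : R => Phi (y + u *: d) - u * ip (g y) d + K * (u * u).
have fd : forall u : R, is_derive u (1:R) f (ip (g (y + u *: d)) d - ip (g y) d + K * (u + u)).
  by move=> u; apply: (@quad_derive R H Phi g ip y d _ K u hP).
have fc : {within `[0, t0], continuous f}.
  apply: derivable_within_continuous => u _.
  have := fd u; by case.
have [xi xiI hxi] := @MVT R f _ 0 t0 t00 (fun u _ => fd u) fc.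
exists xi; first by move: xiI; rewrite in_itv.
move: hxi; rewrite /f scale0r addr0 !mul0r mulr0 subr0 subr0 addr0 => ->.
by [].
Qed.

Lemma grad_diff_bound (y d : H) (xi : R) : 0 < xi ->
  ip (g (y + xi *: d)) d - ip (g y) d <= L * xi * ip d d /\
  - (L * xi * ip d d) <= ip (g (y + xi *: d)) d - ip (g y) d.
Proof.
move=> xi0.
have hb : `|g (y + xi *: d) - g y| <= L * xi * `|d|.
  apply: le_trans (hL _ _) _.
  by rewrite addrC addKr normrZ gtr0_norm // mulrA.
have := @ip_bound _ _ _ (mulr_gt0 L0 xi0) hb.
by rewrite ipDl ipNl.
Qed.

Lemma descent (y d : H) :
  Phi (y + d) <= Phi y + ip (g y) d + L / 2 * ip d d.
Proof.
have [xi /andP[xi0 xi1] hxi] := mvt_line y d (- (L / 2 * ip d d)) 1 ltr01.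
have [hb _] := grad_diff_bound y d xi xi0.
move: hxi; rewrite scale1r !mul1r => hxi.
have hN : 0 <= ip d d := ip_ge0 d.
have : (ip (g (y + xi *: d)) d - ip (g y) d + - (L / 2 * ip d d) * (xi + xi)) <= 0.
  have -> : - (L / 2 * ip d d) * (xi + xi) = - (L * xi * ip d d) by field.
  lra.
nra.
Qed.

Lemma descent_low (y d : H) (t : R) : 0 < t ->
  Phi y + t * ip (g y) d - L / 2 * (t * t) * ip d d <= Phi (y + t *: d).
Proof.
move=> t0.
have [xi /andP[xi0 xit] hxi] := mvt_line y d (L / 2 * ip d d) t t0.
have [_ hb] := grad_diff_bound y d xi xi0.
have : 0 <= (ip (g (y + xi *: d)) d - ip (g y) d + (L / 2 * ip d d) * (xi + xi)).
  have -> : (L / 2 * ip d d) * (xi + xi) = (L * xi * ip d d) by field.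
  lra.
nra.
Qed.


Lemma small_t (a b : R) : (forall t, 0 < t < 1 -> 0 <= a + t * b) -> 0 <= a.
Proof.
move=> h; rewrite leNgt; apply/negP => a0.
pose b' := `|b| + 1.
have b'0 : 0 < b' by rewrite /b' ltr_pwDr.
have bb : b <= b' by rewrite /b' (le_trans (ler_norm b)) // lerDl.
pose t := (- a) / (2 * (b' - a)).
have den : 0 < 2 * (b' - a) by rewrite mulr_gt0 // subr_gt0 (lt_trans a0).
have t0 : 0 < t by rewrite divr_gt0 // oppr_gt0.
have tb : t * (2 * (b' - a)) = - a by rewrite /t mulfVK // gt_eqF.
have t1 : t < 1 by nra.
have := h t; rewrite t0 t1 => /(_ isT) h1.
nra.
Qed.

Lemma vec_comb (t : R) (y z : H) : t *: z + (1 - t) *: y = y + t *: (z - y).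
Proof. by rewrite scalerBl scale1r scalerBr addrCA addrC -addrA [- _ + _]addrC. Qed.

Hypothesis Phiconv : forall (x y : H) (t : R), 0 <= t <= 1 ->
    Phi (t *: x + (1 - t) *: y) <= t * Phi x + (1 - t) * Phi y.

Lemma conv_grad (y z : H) : Phi y + ip (g y) (z - y) <= Phi z.
Proof.
rewrite -subr_ge0.
apply: (@small_t _ (L / 2 * ip (z - y) (z - y))) => t /andP[t0 t1].
have h1 := Phiconv z y t; rewrite (ltW t0) (ltW t1) in h1; move: (h1 isT) => {}h1.
have h2 := descent_low y (z - y) t t0.
rewrite vec_comb in h1.
have hN := ip_ge0 (z - y).
rewrite -(pmulr_rge0 _ t0).
nra.
Qed.

Context (Psi : H -> \bar R).
Hypothesis Psiconv : convex_efun Psi.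

Lemma prox_weak (s : R) (w p z : H) (a b : R) : 0 < s -> is_prox s Psi w p ->
  Psi p = a%:E -> Psi z = b%:E -> 0 <= b - a + s^-1 * ip (p - w) (z - p).
Proof.
move=> s0 hprox pa zb.
apply: (@small_t _ ((2 * s)^-1 * ip (z - p) (z - p))) => t /andP[t0 t1].
have h1 := hprox (t *: z + (1 - t) *: p).
have h2 := Psiconv z p t; rewrite t0 t1 in h2; move: (h2 isT) => {}h2.
rewrite zb pa -!EFinM -EFinD in h2.
have h3 := le_trans h1 (leeD2r ((2 * s)^-1 * `|t *: z + (1 - t) *: p - w| ^+ 2)%:E h2).
rewrite pa -!EFinD lee_fin in h3.
rewrite vec_comb !ipN2 in h3.
move: h3; rewrite (_ : p + t *: (z - p) - w = (p - w) + t *: (z - p)); last by rewrite addrAC.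
move: (p - w) (z - p) => A B.
rewrite !(ipDl, ipDr, ipZl, ipZr) (ipC B A) => h3.
have si : 0 < s^-1 by rewrite invr_gt0.
have s2 : (2 * s)^-1 = s^-1 / 2 by rewrite invfM mulrC.
rewrite s2 in h3 *.
rewrite -(pmulr_rge0 _ t0).
nra.
Qed.

Lemma KI (s : R) (y p z : H) (a b : R) : 0 < s -> s * L <= 1 ->
  is_prox s Psi (y - s *: g y) p -> Psi p = a%:E -> Psi z = b%:E ->
  a + Phi p <= b + Phi z + s^-1 * ip (y - p) (y - z) - (2 * s)^-1 * ip (y - p) (y - p).
Proof.
move=> s0 sL hprox pa zb.
have h1 := @prox_weak s _ _ _ _ _ s0 hprox pa zb.
have e1 : s^-1 * ip (p - (y - s *: g y)) (z - p) =
    s^-1 * ip (p - y) (z - p) + ip (g y) (z - p).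
  rewrite (_ : p - (y - s *: g y) = (p - y) + s *: g y); last by rewrite opprB addrA addrAC.
  rewrite ipDl ipZl mulrDr mulrA mulVf ?mul1r //; exact: lt0r_neq0.
rewrite e1 in h1.
have h2 := conv_grad y z.
have h3 := descent y (p - y).
rewrite (_ : y + (p - y) = p) in h3; last by rewrite addrC subrK.
have si : L <= s^-1 by rewrite -(ler_pM2l s0) mulfV ?lt0r_neq0.
have sL2 : 0 <= s^-1 - L by rewrite subr_ge0.
have hN := mulr_ge0 sL2 (ip_ge0 (y - p)).
have s2 : (2 * s)^-1 = s^-1 / 2 by rewrite invfM mulrC.
rewrite s2.
move: h1 h2 h3 hN; move: (g y) (s^-1) => gy si'.
rewrite !(ipDl, ipDr, ipZl, ipZr, ipNl, ipNr) (ipC p y).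
nra.
Qed.

Ltac ipexp := rewrite !(ipDl, ipDr, ipZl, ipZr, ipNl, ipNr).

Lemma identD (a0 a1 a2 : H) (b si : R) :
  let y := a1 + b *: (a1 - a0) in
  si * ip (y - a2) (y - a1) - si / 2 * ip (y - a2) (y - a2) =
  si / 2 * (b ^+ 2 * ip (a1 - a0) (a1 - a0) - ip (a2 - a1) (a2 - a1)).
Proof.
rewrite /=; ipexp.
rewrite ?(ipC a1 a0) ?(ipC a2 a0) ?(ipC a2 a1).
by field.
Qed.

Lemma identL (a0 a1 a2 xs : H) (b T si : R) :
  let y := a1 + b *: (a1 - a0) in
  si * ((T ^+ 2 - T) * ip (y - a2) (y - a1) + T * ip (y - a2) (y - xs))
  - T ^+ 2 * (si / 2) * ip (y - a2) (y - a2) =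
  si / 2 * (ip ((b * T + 1) *: a1 - (b * T) *: a0 - xs) ((b * T + 1) *: a1 - (b * T) *: a0 - xs)
            - ip (T *: a2 - (T - 1) *: a1 - xs) (T *: a2 - (T - 1) *: a1 - xs)).
Proof.
rewrite /=; ipexp.
rewrite ?(ipC a1 a0) ?(ipC a2 a0) ?(ipC a2 a1) ?(ipC xs a0) ?(ipC xs a1) ?(ipC xs a2).
by field.
Qed.

Lemma steps (s alpha : R) (x : nat -> H) (xs : H) (k : nat) (a0 a1 bs : R) :
  0 < s -> s * L <= 1 -> 3 < alpha -> (1 <= k)%N ->
  is_prox s Psi ((x k + ((k%:R - 1) / (k%:R + alpha - 1)) *: (x k - x k.-1))
       - s *: g (x k + ((k%:R - 1) / (k%:R + alpha - 1)) *: (x k - x k.-1))) (x k.+1) ->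
  Psi (x k) = a0%:E -> Psi (x k.+1) = a1%:E -> Psi xs = bs%:E ->
  let th0 := a0 + Phi (x k) - (bs + Phi xs) in
  let th1 := a1 + Phi (x k.+1) - (bs + Phi xs) in
  let b := (k%:R - 1) / (k%:R + alpha - 1) in
  let c := (alpha - 1)^-1 in
  let T := (k.+1%:R + alpha - 2) * c in
  let Tk := (k%:R + alpha - 2) * c in
  let v0 := Tk *: x k - (Tk - 1) *: x k.-1 - xs in
  let v1 := T *: x k.+1 - (T - 1) *: x k - xs in
  th1 + ip (x k.+1 - x k) (x k.+1 - x k) / (2 * s) <=
     th0 + b ^+ 2 * ip (x k - x k.-1) (x k - x k.-1) / (2 * s) /\
  T ^+ 2 * th1 + ip v1 v1 / (2 * s) <= (T ^+ 2 - T) * th0 + ip v0 v0 / (2 * s).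
Proof.
move=> s0 sL a3 k1 hprox h0 h1 hs th0 th1 b c T Tk v0 v1.
set y := x k + b *: (x k - x k.-1).
have I1 := @KI s _ _ _ _ _ s0 sL hprox h1 h0.
have I2 := @KI s _ _ _ _ _ s0 sL hprox h1 hs.
rewrite -/y in I1 I2.
have e2 : (2 * s)^-1 = s^-1 / 2 by rewrite invfM mulrC.
have ed : forall V, V / (2 * s) = s^-1 / 2 * V by move=> V; rewrite e2 mulrC.
rewrite e2 in I1 I2; rewrite !ed.
have K1 : 1 <= k%:R :> R by rewrite ler1n.
have a1' : 0 < alpha - 1 by lra.
have cE : (alpha - 1) * c = 1 by rewrite /c mulfV // gt_eqF.
have c0 : 0 < c by rewrite /c invr_gt0.
split.
  have iD := identD (x k.-1) (x k) (x k.+1) b (s^-1).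
  cbv zeta in iD; rewrite -/y in iD.
  rewrite /th0 /th1; rewrite mulrBr in iD; nra.
have eT : b * T = Tk - 1.
  rewrite /b /T /Tk /c (_ : k.+1%:R = k%:R + 1); last by rewrite -addn1 natrD.
  field; apply/andP; split; apply: lt0r_neq0; lra.
have iL := identL (x k.-1) (x k) (x k.+1) xs b T (s^-1).
cbv zeta in iL; rewrite -/y eT subrK -/v0 -/v1 in iL.
have T1 : 1 <= T.
  rewrite /T (_ : k.+1%:R = k%:R + 1); last by rewrite -addn1 natrD.
  have -> : (k%:R + 1 + alpha - 2) * c = k%:R * c + (alpha - 1) * c by ring.
  rewrite cE; have := mulr_ge0 (ler0n R k) (ltW c0); lra.
have w1 : 0 <= T ^+ 2 - T by rewrite -[T ^+ 2]/(T * T); nra.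
have w2 : 0 <= T by lra.
have J1 := ler_wpM2l w1 I1.
have J2 := ler_wpM2l w2 I2.
rewrite /th0 /th1.
move: J1 J2 iL.
move: (s^-1 / 2) (ip (y - x k.+1) (y - x k.+1)) (ip (y - x k.+1) (y - x k))
  (ip (y - x k.+1) (y - xs)) (ip v0 v0) (ip v1 v1) => q C A B W0 W1.
rewrite -[T ^+ 2]/(T * T).
nra.
Qed.
End IP.

Theorem lemma1 (R : realType) (H : completeNormedModType R)
  (ip : H -> H -> R) (Psi : H -> \bar R) (Phi : H -> R) (gradPhi : H -> H)
  (L alpha s : R) (x : nat -> H) (xstar : H) :
  is_inner_product ip ->
  proper_efun Psi -> lower_semicontinuous Psi -> convex_efun Psi ->
  convex_fun Phi ->
  (forall z : H, differentiable Phi z /\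
     forall h : H, 'd Phi z h = ip (gradPhi z) h) ->
  continuous gradPhi ->
  0 < L ->
  (forall u v : H, `|gradPhi u - gradPhi v| <= L * `|u - v|) ->
  (exists z : H, forall u : H, (Psi z + (Phi z)%:E <= Psi u + (Phi u)%:E)%E) ->
  3 < alpha -> 0 < s -> s < L^-1 ->
  (forall k : nat, (1 <= k)%N ->
     let y := x k + ((k%:R - 1) / (k%:R + alpha - 1)) *: (x k - x k.-1) in
     is_prox s Psi (y - s *: gradPhi y) (x k.+1)) ->
  (forall u : H, (Psi xstar + (Phi xstar)%:E <= Psi u + (Phi u)%:E)%E) ->
  exists l : R,
    (fun k : nat =>
       ((k%:R ^+ 2 * `|x k.+1 - x k| ^+ 2)%R%:E
        + (k.+1%:R ^+ 2)%R%:E * ((Psi (x k.+1) + (Phi (x k.+1))%:E)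
                              - (Psi xstar + (Phi xstar)%:E)))%E)
    @ \oo --> l%:E.
Proof.
move=> [ipC ipL ipN2] [Pnm [z0 z0fin]] _ Psiconv Phiconv hP _ L0 hL _ a3 s0 sL1 hprox hmin.
have sL : s * L <= 1.
  by have := sL1; rewrite -(ltr_pM2r L0) mulVf ?gt_eqF // => /ltW.
have finz0 : Psi z0 = (fine (Psi z0))%:E by rewrite fineK.
have fin_next : forall k, (1 <= k)%N -> Psi (x k.+1) = (fine (Psi (x k.+1)))%:E.
  move=> k k1; rewrite fineK // fin_numE Pnm /=.
  apply/eqP => E.
  have := hprox k k1 z0; rewrite E finz0 /=.
  by [].
have fin_s : Psi xstar = (fine (Psi xstar))%:E.
  rewrite fineK // fin_numE Pnm /=.
  apply/eqP => E.
  have := hmin z0; rewrite E finz0 /=.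
  by [].
have fin2 : forall k, (2 <= k)%N -> Psi (x k) = (fine (Psi (x k)))%:E.
  by case=> [|k] // k2; apply: fin_next.
pose bs := fine (Psi xstar).
pose th k := fine (Psi (x k)) + Phi (x k) - (bs + Phi xstar).
pose N k := ip (x k - x k.-1) (x k - x k.-1).
pose tau (k : nat) := (k%:R + alpha - 2) / (alpha - 1).
pose V k := ip (tau k *: x k - (tau k - 1) *: x k.-1 - xstar)
               (tau k *: x k - (tau k - 1) *: x k.-1 - xstar).
have th0 : forall k, (1 < k)%N -> 0 <= th k.
  move=> k k2; have := hmin (x k); rewrite fin2 // fin_s -!EFinD lee_fin.
  rewrite /th /bs; lra.
have N0 : forall k, (1 < k)%N -> 0 <= N k by move=> k _; exact: ip_ge0.
have V0 : forall k, (1 < k)%N -> 0 <= V k by move=> k _; exact: ip_ge0.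
have ST := fun k (k2 : (1 < k)%N) =>
  @steps R H ip ipC ipL ipN2 Phi gradPhi L hP L0 hL Phiconv Psi Psiconv s alpha x xstar k
    (fine (Psi (x k))) (fine (Psi (x k.+1))) bs s0 sL a3 (ltnW k2) (hprox k (ltnW k2))
    (fin2 k k2) (fin_next k (ltnW k2)) fin_s.
have hu := @seq_main R s alpha th N V s0 a3 th0 N0 V0
  (fun k k2 => proj2 (ST k k2)) (fun k k2 => proj1 (ST k k2)).
exists 0.
have fE : forall k, (1 <= k)%N ->
  ((k%:R ^+ 2 * `|x k.+1 - x k| ^+ 2)%R%:E
        + (k.+1%:R ^+ 2)%R%:E * ((Psi (x k.+1) + (Phi (x k.+1))%:E)
                              - (Psi xstar + (Phi xstar)%:E)))%E
  = (k%:R ^+ 2 * N k.+1 + k.+1%:R ^+ 2 * th k.+1)%:E.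
  move=> k k1; rewrite fin_next // fin_s ipN2.
  by rewrite /N /th /bs.
apply: cvg_EFin.
  exists 1%N => // k /= k1.
  by rewrite fE.
apply: (@squeeze_cvgr _ _ _ _ (fun _ => 0)
  (fun k => (1 + 2 * s) * (k.+1%:R ^+ 2 * (th k.+1 + N k.+1 / (2 * s))))).
- exists 2%N => // k /= k2.
  rewrite fE /=; last by lia.
  have t1 := th0 k.+1 (leqW k2).
  have n1 := N0 k.+1 (leqW k2).
  have K0 : 0 <= k%:R ^+ 2 :> R by rewrite exprn_ge0.
  have K1 : k%:R ^+ 2 <= k.+1%:R ^+ 2 :> R.
    by rewrite lerXn2r ?nnegrE ?ler0n // ler_nat.
  have s2 : 0 < 2 * s by rewrite mulr_gt0.
  have e : N k.+1 = 2 * s * (N k.+1 / (2 * s)) by rewrite mulrC divfK // gt_eqF.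
  apply/andP; split.
    by rewrite addr_ge0 // mulr_ge0 // exprn_ge0.
  move: K0 K1; rewrite {1}e.
  have A0 : 0 <= N k.+1 / (2 * s) by rewrite divr_ge0 // ltW.
  move: (N k.+1 / (2 * s)) A0 (th k.+1) t1 (k%:R ^+ 2) (k.+1%:R ^+ 2) => A A0 T T0 a b a0 ab.
  have b0 : 0 <= b by lra.
  have s0' := s0.
  have h1 : 0 <= s * ((b - a) * A) by apply: mulr_ge0; [lra | apply: mulr_ge0; lra].
  have h2 : 0 <= b * A by apply: mulr_ge0.
  have h3 : 0 <= s * (b * T) by apply: mulr_ge0; [lra | apply: mulr_ge0].
  nra.
- exact: cvg_cst.
- have := cvgMl_tmp (a:=1 + 2 * s) hu; rewrite mulr0; apply; exact: eventually_filter.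
Qed.
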